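(* Consider $S=\mathbb{Z}_+$ with convolution $*$ defined on point masses by $\delta_m*\delta_n=\delta_{\max\{m,n\}}$ if $m\ne n$ or $m=n=0$, and $\delta_n*\delta_n=q_n$ for $n\ge1$, where each $q_n=\sum_{j\in Q_n}q_n(j)\delta_j$ is a probability measure with finite support $Q_n\ni 0$ and $q_n(j)>0$ for $j\in Q_n$. Assume: for $n\ge1$, $\mathcal{L}_n\subset Q_n\subset\mathcal{L}_n\cup\{n\}$ where $\mathcal{L}_n=\{k:k<n\}$; and for $0<m<n$, $q_n(0)=q_n(m)q_m(0)$ and $q_n(0)\bigl(1+\sum_{0<k<n}1/q_k(0)\bigr)\le1$. Let $\lambda$ be the Haar measure of the hermitian discrete hypergroup $(S,* )$, and let $v_n=\lambda(n)$, $u_n=\lambda(n)-\lambda(\mathcal{L}_n)$. Then $\mathcal{X}_b(S)=\widehat{S}$, and $\widehat{S}$ with the topology of uniform convergence on compact subsets of $S$ is identified with the one-point compactification $\mathbb{Z}_+^*=\mathbb{Z}_+\cup\{\infty\}$ via $k\mapsto\chi_k$, where $\chi_\infty(n)=1$ for all $n\in\mathbb{Z}_+$ and, for $k\in\mathbb{Z}_+$, $\chi_k(n)=1$ if $n\le k$, $\chi_k(n)=\beta_k$ if $n=k+1$, and $\chi_k(n)=0$ if $n>k+1$, with $\beta_k=-\frac{\lambda(\mathcal{L}_{k+1})}{\lambda(k+1)}=-\frac{\sum_{j\in\mathcal{L}_{k+1}}v_j}{v_{k+1}}=\frac{u_{k+1}}{v_{k+1}}-1=(\delta_{k+1}*\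delta_{k+1})(k+1)-1=q_{k+1}(k+1)-1.$
   Context: $\mathbb{Z}_+=\{0,1,2,\dots\}$. Under the stated assumptions $(S,* )$ is a hermitian discrete hypergroup: $*$ is associative, $0$ is the identity, $*$ is commutative, and $0\in\operatorname{spt}(\delta_m*\delta_n)$ iff $m=n$. Its Haar measure $\lambda$ is given by $\lambda(0)=1$, $\lambda(n)=1/(\delta_n*\delta_n)(0)$ for $n\ge1$, $\lambda(A)=\sum_{j\in A}\lambda(j)$. For a complex function $\chi$ on $S$ write $\chi(m*n)=\int\chi\,d(\delta_m*\delta_n)$. $\mathcal{X}_b(S)$ is the set of nonzero bounded functions $\chi$ on $S$ with $\chi(m*n)=\chi(m)\chi(n)$ for all $m,n$ (characters); $\widehat{S}$ is the set of $\chi\in\mathcal{X}_b(S)$ with $\chi(m)=\overline{\chi(m)}$ for all $m$ (symmetric characters, the involution being the identity). *)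

(* Defs.v *)
From HB Require Import structures.
From mathcomp Require Import all_boot all_order all_algebra.
From mathcomp Require Import all_classical all_reals all_analysis.
From mathcomp Require Import complex.
Import Order.TTheory GRing.Theory Num.Theory.

Set Implicit Arguments.
Unset Strict Implicit.
Unset Printing Implicit Defensive.

Local Open Scope ring_scope.
Local Open Scope classical_set_scope.

(* Complex numbers C = R[i], with the topology/uniformity of its norm
   (the modulus), obtained through the regular alias ^o. *)
Notation Cx R := ((R[i])^o).

Notation Ffam R := {family compact, nat -> Cx R}.

Section HypergroupDefs.
Variable R : realType.
Local Notation C := (Cx R).

Definition hg_rc (x : R) : C := (x%:C)%C.

(* q n j = q_n(j): the mass at j of q_n = delta_n * delta_n (n >= 1). *)
Variable q : nat -> nat -> R.

Definition hg_qsupp (n : nat) : set nat := [set j | q n j != 0].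

Definition hg_Lset (n : nat) : set nat := [set k | (k < n)%N].

Definition hg_qhyp : Prop :=
  (forall n, (0 < n)%N ->
     [/\ (forall j, hg_qsupp n j -> 0 < q n j),
         hg_qsupp n 0%N,
         hg_Lset n `<=` hg_qsupp n,
         hg_qsupp n `<=` hg_Lset n `|` [set n] &
         \sum_(j < n.+1) q n j = 1 ]) /\
  (forall m n, (0 < m)%N -> (m < n)%N ->
     q n 0%N = q n m * q m 0%N /\
     q n 0%N * (1 + \sum_(1 <= k < n) (q k 0%N)^-1) <= 1).

Definition hg_conv (m n j : nat) : R :=
  if (m != n) || (m == 0%N) then (j == maxn m n)%:R else q n j.

(* chi(m * n) = int chi d(delta_m * delta_n); the measure delta_m*delta_n is
   supported in {0, ..., max m n} under hg_qhyp, so the integral is this sum. *)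
Definition hg_chi_conv (chi : nat -> C) (m n : nat) : C :=
  \sum_(j < (maxn m n).+1) hg_rc (hg_conv m n j) * chi j.

Definition hg_lam (n : nat) : R := if n == 0%N then 1 else (hg_conv n n 0%N)^-1.
Definition hg_lamL (n : nat) : R := \sum_(j < n) hg_lam j.

Definition hg_vv (n : nat) : R := hg_lam n.
Definition hg_uu (n : nat) : R := hg_lam n - hg_lamL n.

Definition hg_Xb : set (nat -> C) :=
  [set chi | (exists n, chi n != 0)
           /\ (exists M : R, forall n, `|chi n| <= hg_rc M)
           /\ (forall m n, hg_chi_conv chi m n = chi m * chi n)].

(* symmetric characters S^ (involution = identity) *)
Definition hg_Shat : set (nat -> C) :=
  [set chi | hg_Xb chi /\ forall m, chi m = (chi m)^*].

Definition hg_beta (k : nat) : R := q k.+1 k.+1 - 1.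

(* k |-> chi_k on Z_+^* = Z_+ u {oo}, with None = oo *)
Definition hg_chik (k : one_point_compactification nat) : Ffam R :=
  match k with
  | None => fun _ => 1
  | Some k => fun n => if (n <= k)%N then 1
                       else if n == k.+1 then hg_rc (hg_beta k) else 0
  end.

End HypergroupDefs.

Definition hg_homeo_onto (X Y : topologicalType) (f : X -> Y) (A : set Y) : Prop :=
  [/\ injective f, range f = A, continuous f &
      forall U : set X, open U -> exists V : set Y, open V /\ f @` U = V `&` A].

(* Main.v *)
Require Import Defs.
From HB Require Import structures.
From mathcomp Require Import all_boot all_order all_algebra.
From mathcomp Require Import all_classical all_reals all_analysis.
From mathcomp Require Import complex.
From mathcomp Require Import ring lra zify.
Import Order.TTheory GRing.Theory Num.Theory.
Set Implicit Arguments.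
Unset Strict Implicit.
Local Open Scope ring_scope.
Local Open Scope classical_set_scope.

Section Alg.
Variable R : realType.
Variable q : nat -> nat -> R.
Hypothesis hq : hg_qhyp q.

Lemma q_ge0 n j : (0 < n)%N -> 0 <= q n j.
Proof.
move=> n0; have [/(_ n n0) [H1 _ _ _ _] _] := hq.
have [->//|nz] := eqVneq (q n j) 0.
exact/ltW/H1.
Qed.

Lemma q_big n j : (0 < n)%N -> (n < j)%N -> q n j = 0.
Proof.
move=> n0 nj; have [/(_ n n0) [_ _ _ H4 _] _] := hq.
apply/eqP; apply: contraT => nz.
have : (hg_Lset n `|` [set n]) j by apply: H4.
rewrite /hg_Lset /=; case=> [/= jn|/= jE]; lia.
Qed.

Lemma q0_gt0 n : (0 < n)%N -> 0 < q n 0.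
Proof.
move=> n0; have [/(_ n n0) [H1 H2 _ _ _] _] := hq.
exact: H1.
Qed.

Lemma q_sum n : (0 < n)%N -> \sum_(j < n.+1) q n j = 1.
Proof. by move=> n0; have [/(_ n n0) [_ _ _ _ ->] _] := hq. Qed.

Lemma lamE j : (0 < j)%N -> hg_lam q j = (q j 0)^-1.
Proof.
by move=> j0; rewrite /hg_lam /hg_conv eqxx /=; case: j j0.
Qed.

Lemma lam_gt0 j : 0 < hg_lam q j.
Proof.
case: j => [|j]; first by rewrite /hg_lam.
by rewrite lamE // invr_gt0 q0_gt0.
Qed.

Lemma q_lam n j : (0 < n)%N -> (j < n)%N -> q n j = q n 0 * hg_lam q j.
Proof.
move=> n0 jn; case: j jn => [|j] jn; first by rewrite /hg_lam mulr1.
have [_ /(_ j.+1 n isT jn) [-> _]] := hq.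
by rewrite lamE // mulrK // unitfE gt_eqF // q0_gt0.
Qed.

Lemma sum_lt n : (0 < n)%N -> \sum_(j < n) q n j = q n 0 * hg_lamL q n.
Proof.
move=> n0; rewrite /hg_lamL big_distrr /=.
by apply: eq_bigr => j _; rewrite q_lam.
Qed.

Lemma qnn n : (0 < n)%N -> q n n = 1 - q n 0 * hg_lamL q n.
Proof.
by move=> n0; rewrite -(@q_sum n n0) big_ord_recr /= sum_lt // addrC addrK.
Qed.

Lemma betaE k : hg_beta q k = - (q k.+1 0 * hg_lamL q k.+1).
Proof. by rewrite /hg_beta qnn // addrC addKr. Qed.

Lemma beta_parts k :
        [/\ hg_beta q k = - (hg_lamL q k.+1 / hg_lam q k.+1),
            hg_beta q k = - ((\sum_(j < k.+1) hg_vv q j) / hg_vv q k.+1),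
            hg_beta q k = hg_uu q k.+1 / hg_vv q k.+1 - 1 &
            hg_beta q k = hg_conv q k.+1 k.+1 k.+1 - 1].
Proof.
have E1 : hg_beta q k = - (hg_lamL q k.+1 / hg_lam q k.+1).
  by rewrite betaE lamE // invrK mulrC.
split => //.
- rewrite /hg_uu /hg_vv mulrBl divff ?gt_eqF ?lam_gt0 //.
  by rewrite E1 addrC addKr.
- by rewrite /hg_conv eqxx.
Qed.

End Alg.

Section C.
Variable R : realType.
Local Notation C := (Cx R).
Lemma rc0 : hg_rc 0 = 0 :> C. Proof. by rewrite /hg_rc rmorph0. Qed.
Lemma rc1 : hg_rc 1 = 1 :> C. Proof. by rewrite /hg_rc rmorph1. Qed.
Lemma rcM (x y : R) : hg_rc (x * y) = hg_rc x * hg_rc y :> C. Proof. by rewrite /hg_rc rmorphM. Qed.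
Lemma rcB (x y : R) : hg_rc (x - y) = hg_rc x - hg_rc y :> C. Proof. by rewrite /hg_rc rmorphB. Qed.
Lemma rcD (x y : R) : hg_rc (x + y) = hg_rc x + hg_rc y :> C. Proof. by rewrite /hg_rc rmorphD. Qed.
Lemma rc_sum n (F : 'I_n -> R) : hg_rc (\sum_(j < n) F j) = \sum_(j < n) hg_rc (F j) :> C.
Proof. by rewrite /hg_rc rmorph_sum. Qed.
Lemma rc_inj (x y : R) : hg_rc x = hg_rc y :> C -> x = y.
Proof. by case. Qed.
Lemma rc_norm (x : R) : `|hg_rc x| = hg_rc `|x| :> C.
Proof. by rewrite /hg_rc normc_def /= expr0n /= addr0 sqrtr_sqr. Qed.
Lemma rc_le (x y : R) : (hg_rc x <= hg_rc y :> C) = (x <= y).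
Proof. exact: lecR. Qed.
Lemma rc_lt (x y : R) : (hg_rc x < hg_rc y :> C) = (x < y).
Proof. exact: ltcR. Qed.
Lemma rc_conj (x : R) : (hg_rc x : C)^* = hg_rc x.
Proof. by rewrite /hg_rc /=; apply/eqP; rewrite eq_complex /= oppr0 !eqxx. Qed.
End C.

Section Ch.
Variable R : realType.
Variable q : nat -> nat -> R.
Hypothesis hq : hg_qhyp q.
Local Notation C := (Cx R).

Lemma conv_max (chi : nat -> C) m n : (m != n) || (m == 0)%N ->
  hg_chi_conv q chi m n = chi (maxn m n).
Proof.
move=> H; rewrite /hg_chi_conv /hg_conv H big_ord_recr /= eqxx rc1 mul1r.
rewrite big1 ?add0r // => j _.
by rewrite (ltn_eqF (ltn_ord j)) rc0 mul0r.
Qed.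

Lemma conv_diag (chi : nat -> C) n : (0 < n)%N ->
  hg_chi_conv q chi n n = \sum_(j < n.+1) hg_rc (q n j) * chi j.
Proof.
move=> n0; rewrite /hg_chi_conv /hg_conv eqxx /= maxnn.
by case: n n0.
Qed.

Definition psi k n : R := if (n <= k)%N then 1 else if n == k.+1 then hg_beta q k else 0.

Lemma chik_some k : (hg_chik q (Some k) : nat -> C) = (fun n => hg_rc (psi k n)).
Proof.
apply/funext => n; rewrite /= /psi.
by case: ifP => _; [rewrite rc1|case: ifP => _ //; rewrite rc0].
Qed.

Lemma psi_lt k m n : (m < n)%N -> psi k m = 1 \/ psi k n = 0.
Proof.
move=> mn; rewrite /psi; have [nk|nk] := leqP n k.+1.
  by left; have -> : (m <= k)%N by lia.
right; have -> : (n <= k)%N = false by lia.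
by have -> : (n == k.+1) = false by lia.
Qed.

Lemma psi_max k m n : (m != n) || (m == 0)%N -> psi k (maxn m n) = psi k m * psi k n.
Proof.
have [mn|nm|->] := ltngtP m n => H.
- by case: (@psi_lt k m n mn) => ->; rewrite ?mul1r ?mulr0.
- by case: (@psi_lt k n m nm) => ->; rewrite ?mulr1 ?mul0r.
- move: H => /= /eqP->.
  by rewrite /psi /= mulr1.
Qed.

Lemma psi_diag k n : (0 < n)%N ->
  \sum_(j < n.+1) q n j * psi k j = psi k n * psi k n.
Proof.
move=> n0; have [nk|nk] := leqP n k.
  rewrite {2 3}/psi nk mulr1 -(q_sum hq n0); apply: eq_bigr => j _.
  rewrite /psi ifT ?mulr1 //; have := ltn_ord j; lia.
have [nE|nk1] := eqVneq n k.+1.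
  subst n; rewrite big_ord_recr /=.
  rewrite (eq_bigr (fun j : 'I_k.+1 => q k.+1 j)); last first.
    move=> j _; rewrite /psi ifT ?mulr1 //; have := ltn_ord j; lia.
  rewrite sum_lt // qnn // /psi ltnn eqxx betaE //.
  by ring.
have nk2 : (k.+2 <= n)%N by lia.
rewrite -(big_mkord xpredT (fun j => q n j * psi k j)).
have nk3 : (k.+2 <= n.+1)%N by lia.
rewrite (@big_cat_nat _ _ _ k.+2) //=.
rewrite [X in _ + X]big1_seq; last first.
  move=> j /andP[_]; rewrite mem_index_iota => /andP[H1 H2].
  rewrite /psi ifF; last by lia.
  by rewrite ifF ?mulr0 //; lia.
rewrite big_nat_recr //= big_mkord.
rewrite (eq_bigr (fun j : 'I_k.+1 => q n 0 * hg_lam q j)); last first.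
  move=> j _; rewrite /psi ifT ?mulr1; last by have := ltn_ord j; lia.
  by rewrite (q_lam hq) //; have := ltn_ord j; lia.
have hk : (k.+1 < n)%N by lia.
rewrite -big_distrr /= addr0 (q_lam hq n0 hk).
have -> : psi k n = 0.
  by rewrite /psi ifF ?(negbTE nk1) //; lia.
rewrite /psi ifF ?eqxx; last by lia.
have [-> _ _ _] := beta_parts hq k.
have := lam_gt0 hq k.+1; set l := hg_lam q k.+1 => l0.
change (\sum_(i < k.+1) hg_lam q i) with (hg_lamL q k.+1).
by field; rewrite gt_eqF.
Qed.

Lemma real_char (f : nat -> R) :
  f 0%N = 1 -> (exists M, forall n, `|f n| <= M) ->
  (forall m n, (m != n) || (m == 0)%N -> f (maxn m n) = f m * f n) ->
  (forall n, (0 < n)%N -> \sum_(j < n.+1) q n j * f j = f n * f n) ->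
  hg_Shat q (fun n => hg_rc (f n) : C).
Proof.
move=> f0 [M fM] fmax fdiag; split; last by move=> m; rewrite rc_conj.
split; first by exists 0%N; rewrite f0 rc1 oner_neq0.
split; first by exists M => n; rewrite rc_norm rc_le.
move=> m n; have [H|H] := boolP ((m != n) || (m == 0)%N).
  by rewrite conv_max // fmax // rcM.
have [mn m0] : m = n /\ (0 < m)%N.
  by move: H; rewrite negb_or negbK => /andP[/eqP -> ]; rewrite lt0n.
subst m; rewrite conv_diag // -rcM -fdiag // rc_sum.
by apply: eq_bigr => j _; rewrite rcM.
Qed.

Lemma chik_Shat x : hg_Shat q (hg_chik q x).
Proof.
case: x => [k|].
  rewrite chik_some; apply: real_char.
  - by rewrite /psi.
  - exists (1 + `|hg_beta q k|) => n; rewrite /psi.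
    case: ifP => _; first by rewrite normr1 lerDl.
    case: ifP => _; first by rewrite lerDr.
    by rewrite normr0 addr_ge0.
  - by move=> m n; exact: psi_max.
  - by move=> n; exact: psi_diag.
have -> : (hg_chik q None : nat -> C) = (fun n => hg_rc 1).
  by apply/funext => n; rewrite rc1.
apply: real_char => //.
- by exists 1 => n; rewrite normr1.
- by move=> m n _; rewrite mulr1.
- by move=> n n0; rewrite mulr1 -[in RHS](q_sum hq n0); apply: eq_bigr => j _; rewrite mulr1.
Qed.

Lemma lamL_gt0 n : 0 < hg_lamL q n.+1.
Proof.
rewrite /hg_lamL big_ord_recl /=.
have h1 := lam_gt0 hq 0.
have h2 : 0 <= \sum_(i < n) hg_lam q (bump 0 i).
  by apply: sumr_ge0 => i _; exact/ltW/lam_gt0.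
lra.
Qed.

Lemma classify (chi : nat -> C) : hg_Xb q chi -> exists x, chi = hg_chik q x.
Proof.
move=> [[n0 chin0] [_ hchar]].
have hmax m n : (m != n) || (m == 0)%N -> chi (maxn m n) = chi m * chi n.
  by move=> H; rewrite -conv_max // hchar.
have cancel1 (a b : C) : b != 0 -> b = a * b -> a = 1.
  by move=> bnz /(congr1 (fun z => z / b)); rewrite mulfK // divff // => ->.
have c0 : chi 0%N = 1.
  by apply: (cancel1 _ _ chin0); rewrite -hmax ?max0n // eqxx orbT.
have hlt m n : (m < n)%N -> chi n != 0 -> chi m = 1.
  move=> mn nz; apply: (cancel1 _ _ nz); rewrite -hmax ?(ltn_eqF mn) //.
  by rewrite (maxn_idPr (ltnW mn)).
have hdiag n : (0 < n)%N -> \sum_(j < n.+1) hg_rc (q n j) * chi j = chi n * chi n.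
  by move=> n0'; rewrite -conv_diag // hchar.
have [allnz|] := pselect (forall n, chi n != 0).
  exists None; apply/funext => m /=.
  exact: (hlt m m.+1).
move=> /existsNP [n1' /negP /negPn chin1'].
have ex : exists n, chi n == 0 by exists n1'.
case: (ex_minnP ex) => n1 /eqP chin1 min1.
case: n1 chin1 min1 => [|N] chin1 min1; first by move: chin1; rewrite c0 => /eqP; rewrite oner_eq0.
have below j : (j <= N)%N -> chi j != 0.
  move=> jN; apply/negP => /min1; lia.
have above j : (N < j)%N -> chi j = 0.
  move=> Nj; have [->//|jN] := eqVneq j N.+1.
  apply/eqP; apply: contraT => jnz.
  have := hlt N.+1 j; rewrite chin1 => /(_ _ jnz) h.
  by move: (h ltac:(lia)) => /eqP; rewrite eq_sym oner_eq0.
have ones j : (j < N)%N -> chi j = 1.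
  by move=> jN; apply: (hlt j N jN); exact: below.
have cn1 : chi N != 1.
  apply/negP => /eqP cN.
  have := hdiag N.+1 isT; rewrite chin1 mulr0 big_ord_recr /= chin1 mulr0 addr0.
  rewrite (eq_bigr (fun j : 'I_N.+1 => hg_rc (q N.+1 j))); last first.
    move=> j _; have := ltn_ord j; rewrite ltnS leq_eqVlt => /orP[/eqP->|jN].
      by rewrite cN mulr1.
    by rewrite ones // mulr1.
  rewrite -rc_sum sum_lt // -rc0 => /rc_inj /eqP.
  by rewrite mulf_eq0 (gt_eqF (q0_gt0 hq _)) // (gt_eqF (lamL_gt0 _)).

case: N chin1 min1 below above ones cn1 => [|k] chin1 min1 below above ones cn1.
  by move: cn1; rewrite c0 eqxx.
set c := chi k.+1 in cn1 *.
have := hdiag k.+1 isT; rewrite big_ord_recr /= -/c.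
rewrite (eq_bigr (fun j : 'I_k.+1 => hg_rc (q k.+1 j))); last first.
  by move=> j _; rewrite ones ?mulr1.
rewrite -rc_sum.
have -> : \sum_(j < k.+1) q k.+1 j = 1 - q k.+1 k.+1.
  by rewrite -(q_sum hq (isT : (0 < k.+1)%N)) [in RHS]big_ord_recr /= addrK.
rewrite rcB rc1 => h.
have : (c - 1) * (c - (hg_rc (q k.+1 k.+1) - 1)) = 0.
  by rewrite -[RHS](subrr (c * c)) -{2}h; ring.
move/eqP; rewrite mulf_eq0 subr_eq0 (negbTE cn1) /= subr_eq0 => /eqP cE.
exists (Some k); apply/funext => n /=.
case: ifP => nk; first by apply: ones; lia.
case: ifP => nk1; first by rewrite (eqP nk1) -/c cE /hg_beta rcB rc1.
by apply: above; lia.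
Qed.

End Ch.

Section T.
Variable R : realType.
Local Notation C := (Cx R).

Lemma hg_eval_cont (t : nat) : continuous (fun g : Ffam R => g t).
Proof.
move=> g B /nbhsP [E entE EB].
have := @fam_nbhs nat C compact [set t] E g entE ltac:(exact: compact_set1).
apply: filterS => h /= Eh; apply: EB; rewrite /xsection /=.
by rewrite inE; exact: Eh.
Qed.

Lemma ball_open_eval (t : nat) (c e : C) :
  open [set g : Ffam R | ball c e (g t)].
Proof.
apply: (@open_comp _ _ (fun g : Ffam R => g t) (ball c e)).
  by move=> g _; apply: hg_eval_cont.
exact: ball_open.
Qed.

Lemma ballE (c e x : C) : ball c e x = (`|c - x| < e).
Proof. by rewrite -ball_normE. Qed.

Lemma natc_bounded (A : set nat) : compact A -> exists M, forall n, A n -> (n < M)%N.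
Proof.
rewrite compact_cover => cA.
have op : forall i : nat, [set: nat] i -> open [set n : nat | (n < i)%N].
  move=> i _; exact: discrete_open.
have cv : A `<=` cover setT (fun i => [set n : nat | (n < i)%N]).
  by move=> n An; exists n.+1 => //=.
have [D _ AD] := cA nat setT _ op cv.
exists (\max_(i <- (finmap.enum_fset D)) i) => n /AD [i /= iD ni].
apply: (leq_trans ni); exact: (@leq_bigmax_seq _ _ xpredT id i).
Qed.

Lemma opc_nbhsNone (A : set nat) (P : set (one_point_compactification nat)):
  (forall n, ~ A n -> P (Some n)) -> P None -> compact A -> nbhs (None : one_point_compactification nat) P.
Proof.
move=> HS HN cA; exists A; first by split => //; exact: discrete_closed.
by move=> [n|] /= [] // [m /= nA [<-]]; apply: HS.
Qed.

Lemma opc_nbhsNoneP (P : set (one_point_compactification nat)) :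
  nbhs (None : one_point_compactification nat) P -> exists M, forall n, (M <= n)%N -> P (Some n).
Proof.
case=> K [cK _] KP; have [M HM] := natc_bounded cK.
exists M => n Mn; apply: KP; left; exists n => //= Kn.
by have := HM _ Kn; lia.
Qed.

Lemma opc_nbhsSome k (P : set (one_point_compactification nat)) : P (Some k) -> nbhs (Some k : one_point_compactification nat) P.
Proof.
move=> Pk.
have H : nbhs k (Some @^-1` P) by rewrite nbhs_principalE; apply/principal_filterP.
exact: H.
Qed.

End T.

Section M.
Variable R : realType.
Variable q : nat -> nat -> R.
Hypothesis hq : hg_qhyp q.
Local Notation C := (Cx R).
Local Notation opc := (one_point_compactification nat).
Local Notation f := (hg_chik q).

Lemma beta_neg k : hg_beta q k < 0.
Proof.
rewrite betaE // oppr_lt0; apply: mulr_gt0; [exact: q0_gt0|exact: lamL_gt0].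
Qed.

Definition phi (y : opc) n : R := if y is Some k then psi q k n else 1.

Lemma fE y n : (f y n : C) = hg_rc (phi y n).
Proof.
case: y => [k|]; first by rewrite chik_some.
by rewrite /= rc1.
Qed.

Lemma phi_other y k : y != Some k -> phi y k.+1 = 1 \/ phi y k.+1 = 0.
Proof.
case: y => [k'|] /=; last by left.
move=> nk; rewrite /psi; case: ifP => _; first by left.
case: ifP => [/eqP [kk]|_]; last by right.
by move: nk; rewrite kk eqxx.
Qed.

Lemma W_some k y :
  ball (hg_rc (hg_beta q k) : C) (hg_rc (- hg_beta q k)) (f y k.+1) <-> y = Some k.
Proof.
have bn := beta_neg k.
rewrite -ball_normE /ball_ /= fE -(rcB (hg_beta q k) (phi y k.+1)) rc_norm rc_lt; split; last first.
  by move=> ->; rewrite /= /psi ltnn eqxx subrr normr0 oppr_gt0.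
have [->//|yn] := eqVneq y (Some k).
case: (phi_other yn) => ->.
  move=> h; exfalso; have : hg_beta q k - 1 < 0 by lra.
  by move/ltr0_norm => e; rewrite e in h; lra.
move=> h; exfalso; rewrite subr0 (ltr0_norm bn) in h; lra.
Qed.

Lemma W_none M y : ball (1 : C) 1 (f y M) ->
  y = None \/ exists2 k, (M <= k)%N & y = Some k.
Proof.
rewrite -ball_normE /ball_ /= fE -rc1 -(rcB 1 (phi y M)) rc_norm rc_lt.
case: y => [k|]; last by left.
rewrite /= /psi; case: ifP => Mk.
  by move=> _; right; exists k.
case: ifP => [/eqP MkE|_].
  have := beta_neg k => bn h; have : 0 <= 1 - hg_beta q k by lra.
  by move/ger0_norm => e; rewrite e in h; exfalso; clear -h bn; lra.
by rewrite subr0 normr1 ltxx.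
Qed.

Lemma W_none_self M y : (y = None \/ exists2 k, (M <= k)%N & y = Some k) ->
  ball (1 : C) 1 (f y M).
Proof.
rewrite -ball_normE /ball_ /= fE -rc1 -(rcB 1 (phi y M)) rc_norm rc_lt.
case=> [->|[k Mk ->]] /=; first by rewrite subrr normr0.
by rewrite /psi Mk subrr normr0.
Qed.

Lemma chik_inj : injective f.
Proof.
have key k y : f y k.+1 = f (Some k) k.+1 -> y = Some k.
  move=> H; apply/(W_some k); rewrite H; apply/(W_some k) => //.
move=> [k|] [k'|] // H.
- by rewrite (key k (Some k')) // H.
- by have := key k None; rewrite H => /(_ erefl).
- by have := key k' None; rewrite H => /(_ erefl).
Qed.

Lemma chik_range : range f = hg_Shat q.
Proof.
apply/seteqP; split.
  by move=> g [x _ <-]; exact: chik_Shat.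
move=> g [Xg _]; have [x ->] := classify hq Xg.
by exists x.
Qed.

Lemma chik_cont : continuous f.
Proof.
move=> [k|].
  move=> P HP; apply: opc_nbhsSome; exact: nbhs_singleton HP.
have FF : Filter (f @ nbhs (None : opc)) by apply: fmap_filter.
apply/(@fam_cvgP nat C compact _ _ FF) => A cA.
move=> P /uniform_nbhs [E [entE EP]].
have [M HM] := natc_bounded cA.
apply: (@opc_nbhsNone `I_M).
- move=> n nM; apply: EP => y Ay /=.
  have yM := HM _ Ay.
  rewrite /= ifT; last by move: nM => /= nM; lia.
  exact: entourage_refl.
- by apply: EP => y Ay /=; exact: entourage_refl.
- exact/finite_compact/finite_II.
Qed.

Lemma chik_open (U : set opc) : open U ->
  exists V : set (Ffam R), open V /\ f @` U = V `&` (hg_Shat q : set (Ffam R)).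
Proof.
move=> oU.
have [M HM] : exists M, U None -> forall n, (M <= n)%N -> U (Some n).
  have [UN|UN] := pselect (U None); last by exists 0%N.
  have : nbhs (None : opc) U by move: oU; rewrite openE => /(_ None UN).
  by move/opc_nbhsNoneP => [M HM]; exists M.
pose W (x : opc) : set (Ffam R) := if x is Some k then
   [set g : Ffam R | ball (hg_rc (hg_beta q k) : C) (hg_rc (- hg_beta q k)) (g k.+1)]
   else [set g : Ffam R | ball (1 : C) 1 (g M)].
exists (\bigcup_(x in U) W x); split.
  by apply: bigcup_open => x _; case: x => [k|]; exact: ball_open_eval.
apply/seteqP; split.
  move=> g [x Ux <-]; split; last exact: chik_Shat.
  exists x => //; case: x Ux => [k|] Ux /=.
    exact: (proj2 (W_some k (Some k)) erefl).
  exact: (@W_none_self M None (or_introl erefl)).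
move=> g [[x Ux Wg] Sg].
have [y gy] := classify hq Sg.1.
subst g; exists y => //.
case: x Ux Wg => [k|] Ux /= Wg.
  by move/W_some: Wg => ->.
by case: (W_none Wg) => [->//|[k Mk ->]]; exact: HM.
Qed.

End M.

Unset Implicit Arguments.
Set Strict Implicit.

Theorem theorem3p6 (R : realType) (q : nat -> nat -> R) :
  hg_qhyp q ->
  [/\ hg_Xb q = hg_Shat q,
      @hg_homeo_onto (one_point_compactification nat) (Ffam R) (hg_chik q) (hg_Shat q :> set (Ffam R)) &
      forall k : nat,
        [/\ hg_beta q k = - (hg_lamL q k.+1 / hg_lam q k.+1),
            hg_beta q k = - ((\sum_(j < k.+1) hg_vv q j) / hg_vv q k.+1),
            hg_beta q k = hg_uu q k.+1 / hg_vv q k.+1 - 1 &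
            hg_beta q k = hg_conv q k.+1 k.+1 k.+1 - 1] ].
Proof.
move=> hq; split.
- apply/seteqP; split; last by move=> chi [].
  by move=> chi Xchi; have [x ->] := classify hq Xchi; exact: chik_Shat.
- split.
  + exact: chik_inj.
  + exact: chik_range.
  + exact: chik_cont.
  + exact: chik_open.
- exact: beta_parts.
Qed.
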